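(* Let $H$ be a real Hilbert space, $C\subset H$ nonempty closed convex, and $A,F:H\to H$ such that: (A1) $A$ is $\lambda$-strongly monotone and $L_A$-Lipschitz continuous, $F$ is $L_F$-Lipschitz continuous, and $A$, $F$ are sequentially weak-to-weak continuous; (A2) the couple $(A,F)$ is monotone; (A3) the solution set $\mathrm{Sol}(A,F,C)$ of $\mathrm{GVI}(A,F,C)$ is nonempty and $\mathcal C:=A(\mathrm{Sol}(A,F,C))$ is convex. Let $\mathcal A:=A^{-1}$, let $u^\dagger$ be the unique solution of the problem: find $u\in\mathcal C$ with $\langle\mathcal Au,v-u\rangle\ge0$ for all $v\in\mathcal C$, and let $x^\dagger:=\mathcal Au^\dagger$. For $\alpha>0$ let $F_\alpha:=F+\alpha I$ and let $x_\alpha$ be the unique solution of $\mathrm{GVI}(A,F_\alpha,C)$. Then: (i) the net $\{x_\alpha\}_{\alpha>0}$ is bounded on $(0,\infty)$; (ii) $x_\alpha\to x^\dagger$ (in norm) as $\alpha\to0$, and $x^\dagger\in\mathrm{Sol}(A,F,C)$; (iii) there exists $M>0$ such that $\|x_\alpha-x_\beta\|\le \dfrac{M|\alpha-\beta|}{\beta}$ for all $\alpha,\beta>0$.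
   Context: $\mathrm{GVI}(A,F,C)$: find $x^*\in H$ with $Fx^*\in C$ and $\langle Ax^*,y-Fx^*\rangle\ge0$ for all $y\in C$; its solution set is $\mathrm{Sol}(A,F,C)$. The couple $(A,F)$ is monotone if $\langle Ax-Ay,Fx-Fy\rangle\ge0$ for all $x,y\in H$. An operator is sequentially weak-to-weak continuous if $x^k\rightharpoonup\bar x$ implies $Ax^k\rightharpoonup A\bar x$. Under these assumptions $A$ is invertible, $\mathcal A=A^{-1}$ is Lipschitz and strongly monotone, so $u^\dagger$ exists and is unique; and for each $\alpha>0$ the couple $(A,F_\alpha)$ is $\alpha\lambda$-strongly monotone, so $x_\alpha$ exists and is unique. *)

(* Defs.v *)
From HB Require Import structures.
From mathcomp Require Import all_boot all_order all_algebra.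
From mathcomp Require Import all_classical all_reals all_analysis.
Set Implicit Arguments. Unset Strict Implicit. Unset Printing Implicit Defensive.
Import Order.TTheory GRing.Theory Num.Theory.
Import numFieldNormedType.Exports.
Local Open Scope classical_set_scope.
Local Open Scope ring_scope.

(* A real Hilbert space is modelled as a complete normed space V over a
   realType R together with a (real) inner product [ip] inducing its norm. *)
Definition is_inner_product (R : realType) (V : normedModType R)
  (ip : V -> V -> R) : Prop :=
  [/\ (forall x y, ip x y = ip y x),
      (forall (a : R) x y z, ip (a *: x + y) z = a * ip x z + ip y z)
    & (forall x, ip x x = `|x| ^+ 2)].

Definition strongly_monotone (R : realType) (V : normedModType R)
  (ip : V -> V -> R) (A : V -> V) (lam : R) : Prop :=
  forall x y, lam * `|x - y| ^+ 2 <= ip (A x - A y) (x - y).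

Definition lipschitz_with (R : realType) (V : normedModType R)
  (A : V -> V) (L : R) : Prop :=
  forall x y, `|A x - A y| <= L * `|x - y|.

Definition weak_cvg (R : realType) (V : normedModType R)
  (ip : V -> V -> R) (u : nat -> V) (x : V) : Prop :=
  forall y, (fun k => ip (u k) y) @ \oo --> ip x y.

Definition seq_weak_weak_continuous (R : realType) (V : normedModType R)
  (ip : V -> V -> R) (A : V -> V) : Prop :=
  forall (u : nat -> V) (x : V), weak_cvg ip u x -> weak_cvg ip (A \o u) (A x).

Definition couple_monotone (R : realType) (V : normedModType R)
  (ip : V -> V -> R) (A F : V -> V) : Prop :=
  forall x y, 0 <= ip (A x - A y) (F x - F y).

Definition GVI_sol (R : realType) (V : normedModType R)
  (ip : V -> V -> R) (A F : V -> V) (C : set V) : set V :=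
  [set x | C (F x) /\ forall y, C y -> 0 <= ip (A x) (y - F x)].

(* Main.v *)
Require Import Defs.
From HB Require Import structures.
From mathcomp Require Import all_boot all_order all_algebra.
From mathcomp Require Import all_classical all_reals all_analysis.
From mathcomp Require Import ring lra.
Set Implicit Arguments. Unset Strict Implicit. Unset Printing Implicit Defensive.
Import Order.TTheory GRing.Theory Num.Theory.
Import numFieldNormedType.Exports.
Local Open Scope classical_set_scope.
Local Open Scope ring_scope.
Lemma sq_lt {R : realType} (a b : R) : 0 <= a -> 0 <= b -> a ^+ 2 < b ^+ 2 -> a < b.
Proof. move=> a0 b0 h. rewrite ltNge; apply/negP => ba. have : b ^+ 2 <= a ^+ 2 by rewrite lerXn2r // nnegrE. lra. Qed.
Lemma inv_small {R : realType} (d : R) : 0 < d -> exists N, forall n, (N <= n)%N -> (n.+1%:R)^-1 < d.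
Proof.
move=> d0; have [N _ HN] := nbhs_infty_gtr d^-1; exists N => n Nn.
have h : d^-1 < n.+1%:R.
  apply: lt_le_trans (HN n Nn) _; by rewrite ler_nat.
rewrite -(invrK d) ltf_pV2 ?posrE ?invr_gt0 //.
Qed.
Section IP.
Context {R : realType} {V : completeNormedModType R} (ip : V -> V -> R)
  (Hip : is_inner_product ip).

Lemma ipC x y : ip x y = ip y x.
Proof. by case: Hip. Qed.
Lemma ipxx x : ip x x = `|x| ^+ 2.
Proof. by case: Hip. Qed.
Lemma ipL a x y z : ip (a *: x + y) z = a * ip x z + ip y z.
Proof. by case: Hip. Qed.
Lemma ipDl x y z : ip (x + y) z = ip x z + ip y z.
Proof. by rewrite -[x]scale1r ipL mul1r scale1r. Qed.
Lemma ip0l z : ip 0 z = 0.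
Proof. by have := ipDl 0 0 z; rewrite addr0 => /eqP; rewrite -subr_eq subrr eq_sym => /eqP. Qed.
Lemma ipZl a x z : ip (a *: x) z = a * ip x z.
Proof. by rewrite -[a *: x]addr0 ipL ip0l addr0. Qed.
Lemma ipNl x z : ip (- x) z = - ip x z.
Proof. by rewrite -scaleN1r ipZl mulN1r. Qed.
Lemma ipBl x y z : ip (x - y) z = ip x z - ip y z.
Proof. by rewrite ipDl ipNl. Qed.
Lemma ipDr x y z : ip z (x + y) = ip z x + ip z y.
Proof. by rewrite ipC ipDl !(ipC z). Qed.
Lemma ipZr a x z : ip z (a *: x) = a * ip z x.
Proof. by rewrite ipC ipZl ipC. Qed.
Lemma ipNr x z : ip z (- x) = - ip z x.
Proof. by rewrite ipC ipNl ipC. Qed.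
Lemma ipBr x y z : ip z (x - y) = ip z x - ip z y.
Proof. by rewrite ipDr ipNr. Qed.
Lemma ip0r z : ip z 0 = 0.
Proof. by rewrite ipC ip0l. Qed.

Lemma normD2 x y : `|x + y| ^+ 2 = `|x| ^+ 2 + 2 * ip x y + `|y| ^+ 2.
Proof. rewrite -!ipxx ipDl !ipDr (ipC y x); ring. Qed.
Lemma normB2 x y : `|x - y| ^+ 2 = `|x| ^+ 2 - 2 * ip x y + `|y| ^+ 2.
Proof. rewrite -!ipxx ipBl !ipBr (ipC y x); ring. Qed.

Lemma ip_le x y : ip x y <= `|x| * `|y|.
Proof.
have h1 := normD2 x y; have h2 := normB2 x y.
have s1 : `|x + y| <= `|x| + `|y| := ler_normD x y.
have d1 : `| `|x| - `|y| | <= `|x - y| := ler_dist_dist x y.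
have n0 := normr_ge0 (x + y).
have n1 := normr_ge0 (x - y).
have nx := normr_ge0 x; have ny := normr_ge0 y.
have d2 : (`|x| - `|y|) ^+ 2 <= `|x - y| ^+ 2.
  rewrite -real_normK ?num_real //; apply: lerXn2r => //; rewrite nnegrE //.
have s2 : `|x + y| ^+ 2 <= (`|x| + `|y|) ^+ 2.
  apply: lerXn2r => //; rewrite nnegrE //; exact: addr_ge0.
nra.
Qed.

Lemma ip_abs x y : `|ip x y| <= `|x| * `|y|.
Proof.
rewrite ler_norml ip_le andbT lerNl -ipNr.
by apply: le_trans (ip_le _ _) _; rewrite normrN.
Qed.
End IP.
Lemma arith_par {R : realType} (d u v w i a b : R) : u < d + a^-1 -> v < d + b^-1 -> u = v - 2 * i + w ->
  (d <= v - 1 * i + 4^-1 * w) -> w <= 2 / a + 2 / b.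
Proof. move=> *. lra. Qed.

Lemma arith_c {R : realType} (E a b : R) : 0 < E -> a^-1 < E / 4 * 2^-1 -> b^-1 < E / 4 * 2^-1 ->
  2 / a + 2 / b < E.
Proof. move=> *. lra. Qed.

Lemma arith_bb {R : realType} (b d i : R) : 0 <= b -> b ^+ 2 < d + i -> i <= 1 -> b <= d + 2.
Proof. move=> *. nra. Qed.
Lemma arith_fin {R : realType} (X b a d del i r : R) : 0 <= b -> 0 <= a -> 0 <= d ->
  X ^+ 2 <= (b + a) ^+ 2 -> b ^+ 2 < d + i -> i < del / 2 -> a < r -> r <= 1 ->
  r * (2 * d + 5) <= del / 2 -> b <= d + 2 -> X ^+ 2 <= d + del.
Proof.
move=> b0 a0 d0 h1 h2 h3 h4 h5 h6 h7.
have h8 : a * (2 * b + a) <= r * (2 * d + 5).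
  have : 2 * b + a <= 2 * d + 5 by lra.
  nra.
nra.
Qed.

Section Proj.
Context {R : realType} {V : completeNormedModType R} (ip : V -> V -> R)
  (Hip : is_inner_product ip).

Definition lim_v (c : nat -> V) (p : V) := forall e : R, 0 < e -> exists N, forall k, (N <= k)%N -> `|c k - p| < e.
Definition cvx (K : set V) := forall a b t, K a -> K b -> 0 <= t <= 1 -> K (t *: a + (1 - t) *: b).
Definition sclosed (K : set V) := forall c p, (forall n, K (c n)) -> lim_v c p -> K p.

Lemma cauchy_lim_v (c : nat -> V) :
  (forall e : R, 0 < e -> exists N, forall m n, (N <= m)%N -> (N <= n)%N -> `|c m - c n| < e) ->
  exists p, lim_v c p.
Proof.
move=> H.
have : cvg (c @ \oo).
  apply: cauchy_cvg; apply: cauchy_exP => e e0.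
  have [N HN] := H e e0; exists (c N); exists N => // k /= Nk.
  rewrite -ball_normE /ball_ /=. exact: HN.
move/cvg_ex => [p /cvgrPdist_lt Hp]; exists p => e e0.
have [N _ HN] := Hp e e0; exists N => k Nk; rewrite distrC; exact: HN.
Qed.

Lemma conv_eq (t : R) (c p : V) : t *: c + (1 - t) *: p = p + t *: (c - p).
Proof. by rewrite scalerBl scale1r scalerBr addrCA. Qed.

Lemma subsub (z a b : V) : (z - b) - (a - b) = z - a.
Proof. by rewrite opprB addrA subrK. Qed.

Lemma normBZ2 (v w : V) (s : R) : `|v - s *: w| ^+ 2 = `|v| ^+ 2 - 2 * s * ip v w + s ^+ 2 * `|w| ^+ 2.
Proof. rewrite (normB2 Hip) (ipZr Hip) (normrZ s w) exprMn real_normK ?num_real //; ring. Qed.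

Lemma proj_ex (K : set V) : K !=set0 -> cvx K -> sclosed K ->
  forall z, exists p, K p /\ forall c, K c -> ip (z - p) (c - p) <= 0.
Proof.
move=> [c0 Kc0] cK sK z.
pose S := [set r | exists c, K c /\ r = `|z - c| ^+ 2].
have hlb : has_lbound S by exists 0 => r [c [_ ->]]; exact: sqr_ge0.
have hS : has_inf S by split => //; exists (`|z - c0| ^+ 2), c0.
pose d := inf S.
have dle c : K c -> d <= `|z - c| ^+ 2.
  by move=> Kc; apply: ge_inf => //; exists c.
have d0 : 0 <= d by apply: lb_le_inf; [case: hS|move=> r [c [_ ->]]; exact: sqr_ge0].
have ex n : exists c, K c /\ `|z - c| ^+ 2 < d + (n.+1%:R)^-1.
  have [|r [c [Kc ->]] h] := @inf_adherent R S (n.+1%:R)^-1 _ hS; last by exists c.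
  by rewrite invr_gt0 ltr0Sn.
have [cs Hcs] := choice ex.
have par m n : `|cs m - cs n| ^+ 2 <= 2 * (m.+1%:R)^-1 + 2 * (n.+1%:R)^-1.
  have [Km hm] := Hcs m; have [Kn hn] := Hcs n.
  have Kmid : K (cs n + 2^-1 *: (cs m - cs n)).
    rewrite -conv_eq; apply: cK => //; rewrite invr_ge0 ler0n /= invf_le1 //; lra.
  have := dle _ Kmid; rewrite opprD addrA normBZ2.
  have := normB2 Hip (z - cs n) (cs m - cs n); rewrite subsub => e1.
  have -> : (2^-1 : R) ^+ 2 = 4^-1 by rewrite expr2 -invfM; congr (_^-1); lra.
  have -> : (2 / 2 : R) = 1 by rewrite divff.
  by move=> h; apply: (arith_par hm hn e1 h).
have [p lp] : exists p, lim_v cs p.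
  apply: cauchy_lim_v => e e0.
  have e2 : 0 < e ^+ 2 / 4 * 2^-1.
    by apply: mulr_gt0; [apply: mulr_gt0; [exact: exprn_gt0|]|]; lra.
  have [N HN] := @inv_small _ (e ^+ 2 / 4 * 2^-1) e2; exists N => m n Nm Nn.
  apply: sq_lt; [exact: normr_ge0|exact: ltW|].
  apply: le_lt_trans (par m n) _.
  apply: (arith_c (exprn_gt0 2 e0) (HN m Nm) (HN n Nn)).
have Kp : K p by apply: (sK cs) => // n; case: (Hcs n).
exists p; split => //.
have zpd : `|z - p| ^+ 2 <= d.
  apply/ler_addgt0Pr => del del0.
  pose r := Num.min 1 (del / (2 * (2 * d + 5))).
  have r0 : 0 < r by rewrite lt_min ltr01 /= divr_gt0 //; lra.
  have r1 : r <= 1 by rewrite ge_min lexx.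
  have r2 : r * (2 * d + 5) <= del / 2.
    have : r <= del / (2 * (2 * d + 5)) by rewrite ge_min lexx orbT.
    move=> h; rewrite -ler_pdivlMr; last lra.
    apply: le_trans h _; rewrite invfM mulrA; lra.
  have dl2 : 0 < del / 2 by lra.
  have [N1 HN1] := @inv_small _ (del / 2) dl2; have [N2 HN2] := lp r r0.
  pose n := maxn N1 N2.
  have h1 := HN1 n (leq_maxl _ _); have h2 := HN2 n (leq_maxr _ _).
  have [_ hn] := Hcs n.
  have tri : `|z - p| <= `|z - cs n| + `|cs n - p|.
    have -> : z - p = (z - cs n) + (cs n - p) by rewrite addrA subrK.
    exact: ler_normD.
  set b := `|z - cs n| in tri hn; set a := `|cs n - p| in tri h2.
  have b0 : 0 <= b := normr_ge0 _.
  have a0 : 0 <= a := normr_ge0 _.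
  have zp0 := normr_ge0 (z - p).
  have i1 : (n.+1%:R)^-1 <= 1 :> R by rewrite invf_le1 // ler1n.
  have bb := arith_bb b0 hn i1.
  have hX : `|z - p| ^+ 2 <= (b + a) ^+ 2 by rewrite lerXn2r // nnegrE // addr_ge0.
  exact: (arith_fin b0 a0 d0 hX hn h1 h2 r1 r2 bb).
move=> c Kc; rewrite leNgt; apply/negP => g0.
set g := ip (z - p) (c - p) in g0.
set w := `|c - p| ^+ 2.
have w0 : 0 <= w := sqr_ge0 _.
pose t := g / (w + g).
have t0 : 0 < t by rewrite divr_gt0 //; lra.
have t1 : t <= 1 by rewrite ler_pdivrMr; lra.
have tw : t * w < g.
  rewrite /t mulrAC ltr_pdivrMr; last lra. nra.
have Kq : K (p + t *: (c - p)).
  rewrite -conv_eq; apply: cK => //; rewrite t1 ltW //.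
have := dle _ Kq; rewrite opprD addrA normBZ2 -/g -/w.
nra.
Qed.
End Proj.
Lemma incr_ge (f : nat -> nat) : (forall j, (f j < f j.+1)%N) -> forall j, (j <= f j)%N.
Proof. move=> h; elim=> // j ih; exact: leq_ltn_trans ih (h j). Qed.

Lemma incr_lt (f : nat -> nat) : (forall j, (f j < f j.+1)%N) -> forall i j, (i < j)%N -> (f i < f j)%N.
Proof.
move=> h i j ij; elim: j ij => // j ih; rewrite ltnS leq_eqVlt => /orP[/eqP -> //|/ih hi].
exact: ltn_trans hi (h j).
Qed.

Definition lim_r {R : realType} (u : nat -> R) (l : R) :=
  forall e : R, 0 < e -> exists N, forall k, (N <= k)%N -> `|u k - l| < e.

Lemma diagonal {R : realType} (s : nat -> nat -> R) (B : nat -> R) :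
  (forall m n, `|s m n| <= B m) ->
  exists phi : nat -> nat, (forall k, (phi k < phi k.+1)%N) /\
    forall m, exists l, lim_r (fun k => s m (phi k)) l.
Proof.
move=> hB.
have ext : forall mp : nat * (nat -> nat), exists chi : nat -> nat,
    (forall j, (chi j < chi j.+1)%N) /\ exists l, lim_r (fun j => s mp.1 (mp.2 (chi j))) l.
  move=> [m psi] /=.
  have bf : bounded_fun (fun j => s m (psi j)).
    exists (B m); split; first exact: num_real.
    move=> M BM x _ /=; exact: le_trans (hB _ _) (ltW BM).
  have [chi chiinc /cvg_ex [l /cvgrPdist_lt hl]] := bolzano_weierstrass bf.
  exists chi; split.
    by move=> j; move/increasing_seqP: chiinc; apply.
  exists l => e e0; have [N _ HN] := hl e e0; exists N => k Nk.
  rewrite distrC; exact: HN.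
have [E HE] := choice ext.
pose Phi := fix Phi m := if m is m'.+1 then (fun j => Phi m' (E (m', Phi m') j)) else id.
have PhiS m j : Phi m.+1 j = Phi m (E (m, Phi m) j) by [].
have Einc m j : (E (m, Phi m) j < E (m, Phi m) j.+1)%N by case: (HE (m, Phi m)) => h _; exact: h.
have Phiinc m j : (Phi m j < Phi m j.+1)%N.
  elim: m j => [|m ih] j; first by [].
  rewrite !PhiS; apply: incr_lt => //; exact: Einc.
have Phisub m d : exists chi : nat -> nat, (forall j, (j <= chi j)%N) /\ forall j, Phi (d + m)%N j = Phi m (chi j).
  elim: d => [|d [chi [h1 h2]]]; first by exists id.
  exists (fun j => chi (E (d + m, Phi (d + m)%N) j)); split.
    move=> j; apply: leq_trans (h1 _); apply: incr_ge; exact: Einc.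
  by move=> j; rewrite /= -h2.
exists (fun k => Phi k.+1 k); split.
  move=> k; change (Phi k.+1 k < Phi k.+1 (E (k.+1, Phi k.+1) k.+1))%N; apply: incr_lt => //.
  apply: leq_trans (incr_ge (Einc k.+1) k.+1); exact: leqnn.
move=> m; have [_ [l hl]] := HE (m, Phi m); exists l => e e0.
have [N HN] := hl e e0; exists (maxn N m) => k Nk.
have mk : (m <= k)%N by apply: leq_trans Nk; exact: leq_maxr.
have [chi [h1 h2]] := Phisub m.+1 (k - m)%N.
have -> : k.+1 = ((k - m) + m.+1)%N by rewrite addnS subnK.
rewrite h2; apply: (HN (chi k)); apply: leq_trans (h1 k).
apply: leq_trans Nk; exact: leq_maxl.
Qed.
Lemma lim_r_ext {R : realType} (u v : nat -> R) l : (forall k, u k = v k) -> lim_r u l -> lim_r v l.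
Proof. move=> h hu e e0; have [N HN] := hu e e0; exists N => k Nk; rewrite -h; exact: HN. Qed.

Lemma lim_r_const {R : realType} (c : R) : lim_r (fun _ => c) c.
Proof. by move=> e e0; exists 0%N => k _; rewrite subrr normr0. Qed.

Lemma arith_lin {R : realType} (a x y e : R) : 0 < e -> 0 <= x -> 0 <= y ->
  x < e / (2 * (`|a| + 1)) -> y < e / 2 -> `|a| * x + y < e.
Proof.
move=> e0 x0 y0 hx hy.
have a0 := normr_ge0 a.
have h : (`|a| + 1) * x < e / 2.
  rewrite mulrC -ltr_pdivlMr; last lra.
  by move: hx; rewrite invfM mulrA.
nra.
Qed.

Lemma lim_r_lin {R : realType} (u v : nat -> R) a l1 l2 : lim_r u l1 -> lim_r v l2 ->
  lim_r (fun k => a * u k + v k) (a * l1 + l2).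
Proof.
move=> hu hv e e0.
have e1 : 0 < e / (2 * (`|a| + 1)) by apply: divr_gt0 => //; have := normr_ge0 a; lra.
have e2 : 0 < e / 2 by lra.
have [N1 H1] := hu _ e1; have [N2 H2] := hv _ e2.
exists (maxn N1 N2) => k Nk.
have h1 := H1 k (leq_trans (leq_maxl _ _) Nk); have h2 := H2 k (leq_trans (leq_maxr _ _) Nk).
have -> : a * u k + v k - (a * l1 + l2) = a * (u k - l1) + (v k - l2) by ring.
apply: le_lt_trans (ler_normD _ _) _; rewrite normrM.
exact: arith_lin.
Qed.

Lemma arith_cvx {R : realType} (t x y r : R) : 0 <= t <= 1 -> x <= r -> y <= r -> t * x + (1 - t) * y <= r.
Proof. move=> /andP[t0 t1] hx hy; nra. Qed.

Lemma arith_key {R : realType} (w b a n Q E x : R) : w <= b - a -> x <= a - n -> b <= Q -> Q - E < n -> 0 <= x -> w < E.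
Proof. move=> *; lra. Qed.

Section Weak.
Context {R : realType} {V : completeNormedModType R} (ip : V -> V -> R)
  (Hip : is_inner_product ip).

Lemma ip_diff a b y : `|ip a y - ip b y| <= `|a - b| * `|y|.
Proof. by rewrite -(ipBl Hip); exact: (ip_abs Hip). Qed.

Lemma ip_closed_le (c : nat -> V) q y r : lim_v c q -> (forall j, ip (c j) y <= r) -> ip q y <= r.
Proof.
move=> hc hr; apply/ler_addgt0Pr => del del0.
have y0 := normr_ge0 y.
have d1 : 0 < del / (`|y| + 1) by apply: divr_gt0 => //; lra.
have [N HN] := hc _ d1.
have h := HN N (leqnn N).
have h2 := ip_diff q (c N) y.
rewrite -normrN opprB in h.
have h3 : `|q - c N| * `|y| <= del.
  have : `|q - c N| * (`|y| + 1) <= del.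
    by rewrite -ler_pdivlMr; [exact: ltW|lra].
  have := normr_ge0 (q - c N); nra.
have := hr N; move: h2; rewrite ler_norml => /andP[_ h4]; lra.
Qed.

Lemma p_construct (z : nat -> V) (B : R) : (forall k, `|z k| <= B) ->
  exists p, forall y r, (exists N, forall k, (N <= k)%N -> ip (z k) y <= r) -> ip p y <= r.
Proof.
move=> zB.
have B0 : 0 <= B by apply: le_trans (zB 0%N); exact: normr_ge0.
pose K n := [set c | forall y r, (forall k, (n <= k)%N -> ip (z k) y <= r) -> ip c y <= r].
have Kne n : K n !=set0 by exists (z n) => y r h; exact: h.
have Kcvx n : cvx (K n).
  move=> a b t Ka Kb t01 y r h.
  rewrite (ipDl Hip) !(ipZl Hip); apply: arith_cvx => //; [exact: Ka|exact: Kb].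
have Kcl n : sclosed (K n).
  move=> c q Kc hq y r h; apply: (ip_closed_le hq) => j; exact: Kc.
have Kdec n m : (n <= m)%N -> forall c, K m c -> K n c.
  move=> nm c Kc y r h; apply: Kc => k mk; apply: h; exact: leq_trans mk.
have Kb n c : K n c -> `|c| <= B.
  move=> Kc.
  have h : ip c c <= B * `|c|.
    apply: Kc => k _; apply: le_trans (ip_le Hip _ _) _.
    by apply: ler_wpM2r => //; exact: normr_ge0.
  rewrite (ipxx Hip) in h.
  have := normr_ge0 c; nra.
have ex n : exists p, K n p /\ forall c, K n c -> ip (0 - p) (c - p) <= 0.
  exact: (proj_ex Hip (Kne n) (Kcvx n) (Kcl n)).
have [ps Hps] := choice ex.
have psK n : K n (ps n) by case: (Hps n).
have psle n c : K n c -> `|ps n| ^+ 2 <= ip (ps n) c.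
  move=> Kc; have [_ h] := Hps n; have := h c Kc.
  rewrite sub0r (ipNl Hip) (ipBr Hip) (ipxx Hip); lra.
have psd n m : (n <= m)%N -> `|ps m - ps n| ^+ 2 <= `|ps m| ^+ 2 - `|ps n| ^+ 2.
  move=> nm; have h := psle n _ (Kdec _ _ nm _ (psK m)).
  rewrite (normB2 Hip) (ipC Hip); lra.
pose q n := `|ps n| ^+ 2.
have qB n : q n <= B ^+ 2.
  by rewrite /q lerXn2r ?nnegrE ?normr_ge0 //; exact: Kb (psK n).
have hsup : has_sup (range q).
  split; first by exists (q 0%N), 0%N.
  by exists (B ^+ 2) => _ [n _ <-]; exact: qB.
pose Q := sup (range q).
have qQ n : q n <= Q by apply: sup_upper_bound => //; exists n.
have [p lp] : exists p, lim_v ps p.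
  apply: cauchy_lim_v => e e0.
  have e2 : 0 < e ^+ 2 by exact: exprn_gt0.
  have [_ [N _ <-] hN] := sup_adherent e2 hsup.
  exists N => m n Nm Nn.
  have key : forall a b, (N <= a)%N -> (a <= b)%N -> `|ps b - ps a| < e.
    move=> a b Na ab; apply: sq_lt; [exact: normr_ge0|exact: ltW|].
    have h1 := psd _ _ ab; have h2 := psd _ _ Na; have h3 := qQ b.
    have h4 := sqr_ge0 `|ps a - ps N|.
    rewrite /q in h3 hN; exact: (arith_key h1 h2 h3 hN h4).
  have [mn|nm] := leqP m n.
    by rewrite distrC; apply: key.
  by apply: key => //; exact: ltnW.
exists p => y r [N HN].
have KNp : K N p.
  apply: (Kcl N (fun j => ps (N + j)%N)).
    by move=> j; apply: Kdec (psK _); exact: leq_addr.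
  move=> e e0; have [M HM] := lp e e0; exists M => k Mk; apply: HM.
  exact: leq_trans Mk (leq_addl _ _).
exact: KNp.
Qed.
Lemma lim_pp (z : nat -> V) p :
  (forall y r, (exists N, forall k, (N <= k)%N -> ip (z k) y <= r) -> ip p y <= r) ->
  forall y l, lim_r (fun k => ip (z k) y) l -> ip p y = l.
Proof.
move=> hp y l hl; apply/eqP; rewrite eq_le; apply/andP; split.
  apply/ler_addgt0Pr => d d0; apply: hp; have [N HN] := hl d d0; exists N => k Nk.
  have := HN k Nk; rewrite ltr_norml => /andP[_ h]; lra.
rewrite -lerN2 -(ipNr Hip); apply/ler_addgt0Pr => d d0; apply: hp.
have [N HN] := hl d d0; exists N => k Nk.
have := HN k Nk; rewrite ltr_norml (ipNr Hip) => /andP[h _]; lra.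
Qed.

Lemma weak_subseq (x : nat -> V) (B : R) : (forall n, `|x n| <= B) ->
  exists phi : nat -> nat, (forall k, (phi k < phi k.+1)%N) /\
    exists xb, forall y, lim_r (fun k => ip (x (phi k)) y) (ip xb y).
Proof.
move=> xB.
have B0 : 0 <= B by apply: le_trans (xB 0%N); exact: normr_ge0.
have [phi [phiinc hphi]] := @diagonal R (fun m n => ip (x n) (x m)) (fun _ => B * B)
  (fun m n => le_trans (ip_abs Hip _ _) (ler_pM (normr_ge0 _) (normr_ge0 _) (xB n) (xB m))).
pose z k := x (phi k).
have [p hp] := p_construct (fun k => xB (phi k)).
have pp := lim_pp hp.
exists phi; split => //; exists p.
pose G := [set w | lim_r (fun k => ip (z k) w) (ip p w)].
have Gx m : G (x m).
  have [l hl] := hphi m; have e := pp _ _ hl; rewrite -e in hl; exact: hl.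
have Glin a u v : G u -> G v -> G (a *: u + v).
  move=> Gu Gv; have h := lim_r_lin a Gu Gv.
  have e : a * ip p u + ip p v = ip p (a *: u + v) by rewrite (ipDr Hip) (ipZr Hip).
  rewrite e in h.
  change (lim_r (fun k => ip (z k) (a *: u + v)) (ip p (a *: u + v))).
  apply: lim_r_ext h => k.
  by rewrite (ipDr Hip) (ipZr Hip).
have Gcvx : cvx G.
  move=> a b t Ga Gb _; apply: (Glin) => //.
  have -> : (1 - t) *: b = (1 - t) *: b + 0 by rewrite addr0.
  apply: (Glin) => //.
  change (lim_r (fun k => ip (z k) 0) (ip p 0)).
  rewrite (ip0r Hip); apply: lim_r_ext (lim_r_const 0) => k; by rewrite (ip0r Hip).
have pB : 0 <= `|p| := normr_ge0 p.
have Gcl : sclosed G.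
  move=> c w Gc hw e e0.
  pose del := e / (3 * (B + `|p| + 1)).
  have del0 : 0 < del by apply: divr_gt0 => //; lra.
  have [j Hj] := hw del del0; have hj := Hj j (leqnn j).
  have e3 : 0 < e / 3 by lra.
  have [N HN] := Gc j (e / 3) e3.
  exists N => k Nk.
  have h1 := ip_abs Hip (z k) (w - c j).
  have h2 := HN k Nk.
  have h3 := ip_abs Hip p (c j - w).
  have zk : `|z k| <= B by exact: xB.
  have -> : ip (z k) w - ip p w =
    ip (z k) (w - c j) + (ip (z k) (c j) - ip p (c j)) + ip p (c j - w).
    rewrite !(ipBr Hip); ring.
  rewrite -normrN opprB in hj.
  set a1 := ip (z k) (w - c j) in h1 *; set a2 := ip (z k) (c j) - ip p (c j) in h2 *.
  set a3 := ip p (c j - w) in h3 *.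
  have hd : `|w - c j| <= del by exact: ltW.
  have hd' : `|c j - w| <= del by rewrite distrC.
  have dd : del * (B + `|p| + 1) = e / 3.
    rewrite /del invfM mulrA -mulrA mulVf ?mulr1 //; lra.
  have h1' : `|a1| <= B * del.
    apply: le_trans h1 _; apply: ler_pM => //; exact: normr_ge0.
  have h3' : `|a3| <= `|p| * del.
    apply: le_trans h3 _; apply: ler_pM => //; exact: normr_ge0.
  apply: le_lt_trans (ler_normD _ _) _; apply: le_lt_trans (lerD (ler_normD _ _) (lexx _)) _.
  nra.
move=> y; have [s [Gs hs]] := proj_ex Hip (ex_intro _ (x 0%N) (Gx 0%N)) Gcvx Gcl y.
have orth m : ip (x m) (y - s) = 0.
  have h1 := hs (1 *: x m + s) (Glin _ _ _ (Gx m) Gs).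
  have h2 := hs ((-1) *: x m + s) (Glin _ _ _ (Gx m) Gs).
  rewrite addrK (ipZr Hip) mul1r in h1; rewrite addrK (ipZr Hip) in h2.
  rewrite (ipC Hip); lra.
have ps0 : ip p (y - s) = 0.
  apply: pp; apply: lim_r_ext (lim_r_const 0) => k; by rewrite orth.
have eps : ip p y = ip p s by move: ps0; rewrite (ipBr Hip) => /eqP; rewrite subr_eq0 => /eqP.
rewrite eps; apply: lim_r_ext Gs => k.
by move: (orth (phi k)); rewrite (ipBr Hip) => /eqP; rewrite subr_eq0 => /eqP ->.
Qed.
Lemma weak_closed (K : set V) : K !=set0 -> cvx K -> sclosed K ->
  forall (v : nat -> V) w, (forall k, K (v k)) ->
  (forall y, lim_r (fun k => ip (v k) y) (ip w y)) -> K w.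
Proof.
move=> Kne Kc Kcl v w Kv hv.
have [p [Kp hp]] := proj_ex Hip Kne Kc Kcl w.
have D : ip (w - p) (w - p) <= 0.
  rewrite leNgt; apply/negP => D0.
  have [N HN] := hv (w - p) _ D0.
  have h := hp (v N) (Kv N).
  have := HN N (leqnn N).
  rewrite (ipC Hip) (ipBl Hip) in h.
  rewrite ltr_norml => /andP[h1 _].
  rewrite (ipBl Hip) in h1 D0; lra.
have : `|w - p| ^+ 2 <= 0 by rewrite -(ipxx Hip).
move=> h; have h0 : `|w - p| ^+ 2 == 0 by rewrite eq_le h sqr_ge0.
by move: h0; rewrite expf_eq0 /= normr_eq0 subr_eq0 => /eqP ->.
Qed.
End Weak.
Lemma cvx_of_convex {R : realType} {V : completeNormedModType R} (C : set V) :
  convex_set (C : set (convex_lmodType V)) -> cvx C.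
Proof.
move=> hC a b t Ca Cb /andP[t0 t1].
have := hC a b (Itv01 t0 t1); rewrite !inE => /(_ Ca Cb).
by [].
Qed.
Lemma lim_r_cvg {R : realType} (u : nat -> R) l : lim_r u l -> u @ \oo --> l.
Proof.
move=> H; apply/cvgrPdist_lt => e e0; have [N HN] := H e e0.
exists N => // k /= Nk; rewrite distrC; exact: HN.
Qed.
Lemma cvg_lim_r {R : realType} (u : nat -> R) l : u @ \oo --> l -> lim_r u l.
Proof.
move/cvgrPdist_lt => H e e0; have [N _ HN] := H e e0.
exists N => k Nk; rewrite distrC; exact: HN.
Qed.
Lemma near_right {R : realType} (P : R -> Prop) (d : R) : 0 < d ->
  (forall a, 0 < a -> a < d -> P a) -> \forall a \near 0^'+, P a.
Proof.
move=> d0 h; exists d => //= a /= ha a0; apply: h => //.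
by move: ha; rewrite sub0r normrN gtr0_norm.
Qed.

Lemma lim_v_cvg {R : realType} {V : completeNormedModType R} (c : nat -> V) p :
  lim_v c p -> c @ \oo --> p.
Proof.
move=> H; apply/cvgrPdist_lt => e e0; have [N HN] := H e e0.
exists N => // k /= Nk; rewrite distrC; exact: HN.
Qed.

Lemma sclosed_closed {R : realType} {V : completeNormedModType R} (C : set V) :
  closed C -> sclosed C.
Proof.
move=> Cc c p Kc hp.
have h : \forall n \near \oo, C (c n) by exact: nearW.
by have := closed_cvg C Cc h; apply; last exact: lim_v_cvg hp.
Qed.

Lemma arith_sm {R : realType} (a i e : R) : 0 <= a -> 0 < i -> (a + 1) * i < e -> a * i < e.
Proof. move=> *; nra. Qed.

Lemma lim_r_small {R : realType} (u : nat -> R) c :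
  (forall k, `|u k| <= c * (k.+1%:R)^-1) -> lim_r u 0.
Proof.
move=> hu e e0.
have c1 : 0 < `|c| + 1 by have := normr_ge0 c; lra.
have [N HN] := @inv_small _ (e / (`|c| + 1)) (divr_gt0 e0 c1).
exists N => k Nk; rewrite subr0; apply: le_lt_trans (hu k) _.
have i0 : 0 < (k.+1%:R : R)^-1 by rewrite invr_gt0 ltr0Sn.
have h := HN k Nk.
apply: le_lt_trans (_ : `|c| * (k.+1%:R)^-1 < e).
  by apply: ler_wpM2r; [exact: ltW|exact: ler_norm].
have : (`|c| + 1) * (k.+1%:R : R)^-1 < e by rewrite mulrC -ltr_pdivlMr.
exact: arith_sm (normr_ge0 c) i0.
Qed.
Lemma arith_div {R : realType} (lam d L n : R) : 0 < lam -> 0 <= d -> 0 <= n ->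
  lam * d ^+ 2 <= L * n * d -> d <= `|L| * n / lam.
Proof.
move=> l0 d0 n0 h; rewrite ler_pdivlMr //.
have hL := ler_norm L; have hL0 := normr_ge0 L.
have [->|dn] := eqVneq d 0; first by rewrite mul0r mulr_ge0.
have dp : 0 < d by rewrite lt_neqAle eq_sym dn d0.
rewrite -(ler_pM2r dp); apply: le_trans (_ : L * n * d <= _).
  by apply: le_trans h; rewrite expr2; lra.
by apply: ler_wpM2r; [exact: ltW|apply: ler_wpM2r].
Qed.

Lemma arith_star {R : realType} (al a1 a2 b1 c1 c2 c3 : R) : 0 < al -> 0 <= a1 - (a2 + al * b1) ->
  0 <= c1 + al * c2 - c3 -> 0 <= a2 - a1 - c1 + c3 -> b1 - c2 <= 0.
Proof. move=> *; nra. Qed.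

Unset Implicit Arguments.
Theorem lemma3p2 (R : realType) (V : completeNormedModType R)
  (ip : V -> V -> R) (C : set V) (A F : V -> V) (lam LA LF : R)
  (udag xdag : V) (xa : R -> V) :
  is_inner_product ip ->
  C !=set0 -> closed C -> convex_set (C : set (convex_lmodType V)) ->
  (* (A1) *)
  0 < lam -> strongly_monotone ip A lam -> lipschitz_with A LA ->
  lipschitz_with F LF ->
  seq_weak_weak_continuous ip A -> seq_weak_weak_continuous ip F ->
  (* (A2) *)
  couple_monotone ip A F ->
  (* (A3) *)
  GVI_sol ip A F C !=set0 ->
  convex_set (A @` GVI_sol ip A F C : set (convex_lmodType V)) ->
  (A @` GVI_sol ip A F C) udag ->
  (forall v, (A @` GVI_sol ip A F C) v -> 0 <= ip xdag (v - udag)) ->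
  A xdag = udag ->
  (forall alpha, 0 < alpha ->
     GVI_sol ip A (fun x => F x + alpha *: x) C (xa alpha)) ->
  [/\ (exists M : R, forall alpha, 0 < alpha -> `|xa alpha| <= M),
      xa alpha @[alpha --> 0^'+] --> xdag,
      GVI_sol ip A F C xdag
    & exists M : R, 0 < M /\ forall alpha beta, 0 < alpha -> 0 < beta ->
        `|xa alpha - xa beta| <= M * `|alpha - beta| / beta].
Proof.
move=> Hip Cne Ccl Ccvx lam0 Asm ALip FLip Awk Fwk Cmono [x0 Sx0] _ [xd' Sxd' Axd'] uopt Axd xaS.
have star : forall al xs, 0 < al -> GVI_sol ip A F C xs ->
    ip (A (xa al) - A xs) (xa al) <= 0.
  move=> al xs al0 [Cxs hxs]; have [Cy hy] := xaS al al0.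
  have h1 := hy _ Cxs; have h2 := hxs _ Cy; have h3 := Cmono (xa al) xs.
  rewrite !(ipBr Hip) !(ipDr Hip) !(ipZr Hip) in h1 h2.
  rewrite !(ipBl Hip) !(ipBr Hip) in h3.
  rewrite (ipBl Hip); nra.
pose R0 := `|LA| * `|x0| / lam.
have bd0 : forall al, 0 < al -> `|xa al - x0| <= R0.
  move=> al al0; rewrite /R0; apply: (arith_div lam0 (normr_ge0 _) (normr_ge0 _)).
  apply: le_trans (Asm _ _) _.
  have h := star _ _ al0 Sx0.
  have e : ip (A (xa al) - A x0) (xa al - x0) =
    ip (A (xa al) - A x0) (xa al) - ip (A (xa al) - A x0) x0 by rewrite (ipBr Hip).
  rewrite e.
  have h2 := ip_abs Hip (A (xa al) - A x0) x0.
  have h3 : `|A (xa al) - A x0| * `|x0| <= LA * `|x0| * `|xa al - x0|.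
    rewrite mulrAC; apply: ler_wpM2r; [exact: normr_ge0|exact: ALip].
  move: h2; rewrite ler_norml => /andP[h4 _].
  set I1 := ip _ (xa al) in h *; set I2 := ip _ x0 in h4 *.
  set N1 := `|A (xa al) - A x0| * `|x0| in h3 h4.
  set N2 := LA * `|x0| * `|xa al - x0| in h3 *.
  have : - I2 <= N2 by apply: le_trans h3; rewrite lerNl.
  move: (N2) (I1) (I2) h => a b c h1 h2 ; lra.
pose M := `|x0| + R0.
have bd : forall al, 0 < al -> `|xa al| <= M.
  move=> al al0; rewrite /M addrC; have := ler_normD (xa al - x0) x0.
  rewrite subrK => h; apply: le_trans h _; apply: lerD => //; exact: bd0.
have xdS : GVI_sol ip A F C xdag.
  suff -> : xdag = xd' by [].
  have h := Asm xd' xdag; rewrite Axd' -Axd subrr (ip0l Hip) in h.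
  have h0 : `|xd' - xdag| ^+ 2 == 0.
    rewrite eq_le sqr_ge0 andbT; rewrite -(pmulr_rle0 _ lam0); exact: h.
  by move: h0; rewrite expf_eq0 /= normr_eq0 subr_eq0 => /eqP ->.
have R00 : 0 <= R0 by rewrite /R0 divr_ge0 ?mulr_ge0 ?normr_ge0 // ltW.
have M0 : 0 <= M by rewrite /M addr_ge0 ?normr_ge0.
have K0 : 0 <= `|LA| * M / lam by rewrite divr_ge0 ?mulr_ge0 ?normr_ge0 // ltW.
split.
- by exists M.
- apply/cvgrPdist_lt => e e0.
  case: (EM (exists d, 0 < d /\ forall a, 0 < a -> a < d -> `|xdag - xa a| < e)) => [[d [d0 hd]]|nex].
    exact: (near_right d0 hd).
  exfalso.
  have ex n : exists a, 0 < a /\ a < (n.+1%:R)^-1 /\ e <= `|xdag - xa a|.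
    case: (EM (exists a, 0 < a /\ a < (n.+1%:R)^-1 /\ e <= `|xdag - xa a|)) => // hn.
    exfalso; apply: nex; exists (n.+1%:R)^-1; split; first by rewrite invr_gt0 ltr0Sn.
    move=> a a0 ad; rewrite ltNge; apply/negP => ea; apply: hn; exists a; split => //.
  have [al hal] := choice ex.
  pose xs n := xa (al n).
  have xsB n : `|xs n| <= M by apply: bd; case: (hal n).
  have [phi [phiinc [xb hxb]]] := weak_subseq Hip xsB.
  pose yk k := xs (phi k); pose ak k := al (phi k).
  have ak0 k : 0 < ak k by case: (hal (phi k)).
  have akl k : ak k <= (k.+1%:R)^-1.
    case: (hal (phi k)) => _ [h _]; apply: le_trans (ltW h) _.
    rewrite lef_pV2 ?posrE ?ltr0Sn // ler_nat ltnS; exact: incr_ge.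
  have ek k : e <= `|xdag - yk k| by case: (hal (phi k)) => _ [].
  have wy : weak_cvg ip yk xb := fun y => lim_r_cvg (hxb y).
  have lA y : lim_r (fun k => ip (A (yk k)) y) (ip (A xb) y) := cvg_lim_r (Awk _ _ wy y).
  have lF y : lim_r (fun k => ip (F (yk k)) y) (ip (F xb) y) := cvg_lim_r (Fwk _ _ wy y).
  pose KA := `|A x0| + `|LA| * R0.
  have Ab a : 0 < a -> `|A (xa a)| <= KA.
    move=> a0; rewrite /KA; have := ler_normD (A (xa a) - A x0) (A x0); rewrite subrK addrC => h.
    apply: le_trans h _; apply: lerD => //; apply: le_trans (ALip _ _) _.
    apply: le_trans (_ : `|LA| * `|xa a - x0| <= _).
      by apply: ler_wpM2r; [exact: normr_ge0|exact: ler_norm].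
    by apply: ler_wpM2l; [exact: normr_ge0|exact: bd0].
  have KA0 : 0 <= KA by apply: addr_ge0; [exact: normr_ge0|exact: mulr_ge0 (normr_ge0 _) R00].
  have ykM k : `|yk k| <= M := xsB (phi k).
  have FC : C (F xb).
    apply: (weak_closed Hip Cne (cvx_of_convex Ccvx) (sclosed_closed Ccl)
      (v := fun k => F (yk k) + ak k *: yk k)).
      by move=> k; have [Cy _] := xaS (ak k) (ak0 k).
    move=> y.
    have sm : lim_r (fun k => ak k * ip (yk k) y) 0.
      apply: (@lim_r_small _ _ (M * `|y|)) => k.
      rewrite normrM (gtr0_norm (ak0 k)).
      have h1 : `|ip (yk k) y| <= M * `|y|.
        by apply: le_trans (ip_abs Hip _ _) _; apply: ler_wpM2r; [exact: normr_ge0|exact: ykM].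
      have := ler_pM (ltW (ak0 k)) (normr_ge0 _) (akl k) h1.
      by move=> hh; apply: le_trans hh _; rewrite mulrC.
    have h := lim_r_lin 1 (lF y) sm; rewrite mul1r addr0 in h.
    by apply: lim_r_ext h => k; rewrite (ipDl Hip) (ipZl Hip) mul1r.
  have Sxb : GVI_sol ip A F C xb.
    split => // c Cc; rewrite leNgt; apply/negP => g0.
    set g := ip (A xb) (c - F xb) in g0.
    have eps : 0 < - g / 4 by lra.
    have sm : lim_r (fun k => ak k * ip (A (yk k)) (yk k)) 0.
      apply: (@lim_r_small _ _ (KA * M)) => k.
      rewrite normrM (gtr0_norm (ak0 k)).
      have h1 : `|ip (A (yk k)) (yk k)| <= KA * M.
        apply: le_trans (ip_abs Hip _ _) _.
        apply: ler_pM; [exact: normr_ge0|exact: normr_ge0|exact: (Ab _ (ak0 k))|exact: ykM].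
      have := ler_pM (ltW (ak0 k)) (normr_ge0 _) (akl k) h1.
      by move=> hh; apply: le_trans hh _; rewrite mulrC.
    have [N1 H1] := lA c _ eps; have [N2 H2] := lA (F xb) _ eps.
    have [N3 H3] := lF (A xb) _ eps; have [N4 H4] := sm _ eps.
    pose k := maxn (maxn N1 N2) (maxn N3 N4).
    have h1 := H1 k (leq_trans (leq_maxl _ _) (leq_maxl _ _)).
    have h2 := H2 k (leq_trans (leq_maxr _ _) (leq_maxl _ _)).
    have h3 := H3 k (leq_trans (leq_maxl _ _) (leq_maxr _ _)).
    have h4 := H4 k (leq_trans (leq_maxr _ _) (leq_maxr _ _)).
    have [_ hy] := xaS (ak k) (ak0 k).
    have gv := hy c Cc; have mo := Cmono (yk k) xb.
    change (is_true (0 <= ip (A (yk k)) (c - (F (yk k) + ak k *: yk k)))) in gv.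
    rewrite !(ipBr Hip) !(ipDr Hip) !(ipZr Hip) in gv.
    rewrite !(ipBl Hip) !(ipBr Hip) (ipC Hip (A xb) (F (yk k))) in mo.
    rewrite /g (ipBr Hip) in g0.
    move: h1 h2 h3 h4; rewrite !ltr_norml => /andP[h1 h1'] /andP[h2 h2'] /andP[h3 h3'] /andP[h4 h4'].
    rewrite (ipC Hip (F xb) (A xb)) in h3 h3'.
    have gE : g = ip (A xb) c - ip (A xb) (F xb) by rewrite /g (ipBr Hip).
    lra.
  have uo : 0 <= ip xdag (A xb - udag) by apply: uopt; exists xb.
  have le2 : 0 < lam * e ^+ 2 / 2 by apply: divr_gt0 => //; apply: mulr_gt0 => //; exact: exprn_gt0.
  have [N HN] := lA xdag _ le2.
  have hN := HN N (leqnn N).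
  have st := star (ak N) xdag (ak0 N) xdS.
  change (is_true (ip (A (yk N) - A xdag) (yk N) <= 0)) in st.
  have q1 : lam * e ^+ 2 <= lam * `|yk N - xdag| ^+ 2.
    apply: ler_wpM2l; first exact: ltW.
    rewrite lerXn2r ?nnegrE ?normr_ge0 ?(ltW e0) // distrC; exact: ek.
  have q := le_trans q1 (Asm (yk N) xdag).
  rewrite (ipBr Hip) !(ipBl Hip) in q; rewrite (ipBl Hip) in st.
  rewrite (ipBr Hip) (ipC Hip xdag (A xb)) (ipC Hip xdag udag) in uo.
  rewrite Axd in q st.
  move: hN; rewrite ltr_norml => /andP[hN _].
  lra.
- exact: xdS.
exists (`|LA| * M / lam + 1); split; first lra.
move=> al be al0 be0.
set ya := xa al; set yb := xa be.
have [Cya hya] := xaS al al0; have [Cyb hyb] := xaS be be0.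
have key : be * ip (A ya - A yb) (ya - yb) <= (be - al) * ip (A ya - A yb) ya.
  have h1 := hya _ Cyb; have h2 := hyb _ Cya; have h3 := Cmono ya yb.
  rewrite !(ipBr Hip) !(ipDr Hip) !(ipZr Hip) in h1 h2.
  rewrite !(ipBl Hip) !(ipBr Hip) in h3.
  rewrite !(ipBl Hip) !(ipBr Hip); nra.
set d := `|ya - yb|.
have d0 : 0 <= d := normr_ge0 _.
have hD : `|A ya - A yb| <= LA * d := ALip ya yb.
have hyaM : `|ya| <= M := bd al al0.
have hab := ip_abs Hip (A ya - A yb) ya.
have s1 : lam * be * d ^+ 2 <= be * ip (A ya - A yb) (ya - yb).
  rewrite -mulrA mulrC -mulrA; apply: ler_wpM2l; [exact: ltW|].
  rewrite mulrC; exact: Asm.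
have s2 : (be - al) * ip (A ya - A yb) ya <= `|be - al| * (`|A ya - A yb| * `|ya|).
  apply: le_trans (ler_norm _) _; rewrite normrM; apply: ler_wpM2l => //; exact: normr_ge0.
have s3 : `|be - al| * (`|A ya - A yb| * `|ya|) <= (`|be - al| * LA) * M * d.
  have h := ler_pM (normr_ge0 _) (normr_ge0 _) hD hyaM.
  have -> : `|be - al| * LA * M * d = `|be - al| * ((LA * d) * M) by ring.
  apply: ler_wpM2l => //; exact: normr_ge0.
have := arith_div (mulr_gt0 lam0 be0) d0 M0 (le_trans s1 (le_trans key (le_trans s2 s3))).
move/le_trans; apply.
rewrite normrM normr_id (distrC be al).
have t0 := normr_ge0 (al - be).
set t := `|al - be|.
have -> : t * `|LA| * M / (lam * be) = (`|LA| * M / lam) * t / be.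
  by field; apply/andP; split; apply: lt0r_neq0.
apply: ler_wpM2r; first by rewrite invr_ge0 ltW.
apply: ler_wpM2r => //; lra.
Qed.
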